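(* For every odd $k\ge3$, the parity–majority distribution $P_{\rm MAJ}$ (a distribution on functions $\Omega^{2k}\to\{0,1\}$) satisfies SYM, BAL, MIN and UNI, where these conditions are read with arity $2k$ in place of $k$.
   Context: $\Omega=\{\pm1\}$, $q=2$, $k\ge3$ odd. For $\tau\in\Omega^{2k}$ and a permutation $\theta$ of $[2k]$ define $\psi_{\tau,\theta}:\Omega^{2k}\to\{0,1\}$, $\psi_{\tau,\theta}(\sigma)=\mathbf 1\{\prod_{i=1}^k\sigma_{\theta(i)}\tau_i=1\}\mathbf 1\{\sum_{i=k+1}^{2k}\sigma_{\theta(i)}\tau_i<0\}+\mathbf 1\{\prod_{i=1}^k\sigma_{\theta(i)}\tau_i=-1\}\mathbf 1\{\sum_{i=k+1}^{2k}\sigma_{\theta(i)}\tau_i>0\}$. $\Psi=\{\psi_{\tau,\theta}\}$ and $P_{\rm MAJ}$ is uniform on $\Psi$. Let $K=2k$ be the arity, $\boldsymbol\psi$ a sample from $P=P_{\rm MAJ}$, $\xi=q^{-K}\sum_{\sigma\in\Omega^K}\mathbb E[\boldsymbol\psi(\sigma)]$, $\psi^{\theta'}(\sigma)=\psi(\sigma_{\theta'(1)},\dots,\sigma_{\theta'(K)})$. SYM: for all $i\in[K]$, $\omega\in\Omega$, $\psi\in\Psi$, $\sum_{\tau\in\Omega^K}\mathbf 1\{\tau_i=\omega\}\psi(\tau)=q^{K-1}\xi$, and $P(\psi)=P(\psi^{\theta'})$ for every permutation $\theta'$ of $[K]$. BAL: $\phi(\mu)=\sum_{\tau\in\Omega^K}\mathbb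 E[\boldsymbol\psi(\tau)]\prod_{i=1}^K\mu(\tau_i)$ is concave on distributions on $\Omega$ and maximised at the uniform distribution. MIN: among distributions $\rho$ on $\Omega\times\Omega$ with both marginals uniform, $\varphi(\rho)=\sum_{\sigma,\tau\in\Omega^K}\mathbb E[\boldsymbol\psi(\sigma)\boldsymbol\psi(\tau)]\prod_{i=1}^K\rho(\sigma_i,\tau_i)$ has the uniform distribution as unique global minimiser. UNI: every CSP with constraint functions from $\Psi$ (constraint $a$ on a $K$-tuple $\partial a$ of variables) in which each constraint has pairwise distinct variables and whose bipartite variable–constraint graph is unicyclic admits $\sigma$ with $\prod_a\psi_a(\sigma(\partial a))>0$. *)

(* Defs.v *)
From HB Require Import structures.
From mathcomp Require Import all_boot all_order all_algebra all_fingroup.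
Set Implicit Arguments. Unset Strict Implicit. Unset Printing Implicit Defensive.
Import Order.TTheory GRing.Theory Num.Theory.
Local Open Scope ring_scope.

(* Omega = {+1,-1} is represented by bool: true = +1, false = -1 (q = 2). *)
Definition spin (b : bool) : int := if b then 1 else -1.

(* Assignments Omega^K and constraint functions Omega^K -> {0,1}
   (the value of a constraint function is a bool, read as 0/1). *)
Definition Assign (K : nat) := {ffun 'I_K -> bool}.
Definition Fun (K : nat) := {ffun Assign K -> bool}.

(* psi_{tau,theta} with arity 2k; index i in [2k] is the ordinal i-1, so
   "1 <= i <= k" is "i < k" and "k+1 <= i <= 2k" is "k <= i". *)
Definition psi_maj (k : nat) (tau : Assign (2 * k)) (th : {perm 'I_(2 * k)})
  : Fun (2 * k) :=
  [ffun s : Assign (2 * k) =>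
     let p := \prod_(i : 'I_(2 * k) | (i < k)%N) (spin (s (th i)) * spin (tau i)) in
     let S := \sum_(i : 'I_(2 * k) | (k <= i)%N) (spin (s (th i)) * spin (tau i)) in
     ((p == 1) && (S < 0)) || ((p == -1) && (0 < S))].

Definition Psi_maj (k : nat) : {set Fun (2 * k)} :=
  [set psi_maj tau th | tau : Assign (2 * k), th : {perm 'I_(2 * k)}].

Definition P_maj (R : realFieldType) (k : nat) (psi : Fun (2 * k)) : R :=
  if psi \in Psi_maj k then (#|Psi_maj k|%:R)^-1 else 0.

Section Conditions.
Variables (R : realFieldType) (K : nat).
Variable (Psi : {set Fun K}).
Variable (P : Fun K -> R).

Definition Epsi (s : Assign K) : R := \sum_(psi : Fun K) P psi * (psi s)%:R.

Definition xi : R := (2%:R ^+ K)^-1 * \sum_(s : Assign K) Epsi s.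

Definition permfun (th : {perm 'I_K}) (psi : Fun K) : Fun K :=
  [ffun s : Assign K => psi [ffun i => s (th i)]].

Definition SYM : Prop :=
  (forall (i : 'I_K) (w : bool) (psi : Fun K), psi \in Psi ->
     \sum_(t : Assign K) (t i == w)%:R * (psi t)%:R = 2%:R ^+ K.-1 * xi)
  /\ (forall (th : {perm 'I_K}) (psi : Fun K), P psi = P (permfun th psi)).

Definition is_dist (mu : {ffun bool -> R}) : Prop :=
  (forall w, 0 <= mu w) /\ \sum_(w : bool) mu w = 1.

Definition phiB (mu : {ffun bool -> R}) : R :=
  \sum_(t : Assign K) Epsi t * \prod_(i : 'I_K) mu (t i).

Definition unif1 : {ffun bool -> R} := [ffun _ => 2%:R^-1].

Definition BAL : Prop :=
  (forall (mu nu : {ffun bool -> R}) (t : R), is_dist mu -> is_dist nu ->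
     0 <= t -> t <= 1 ->
     t * phiB mu + (1 - t) * phiB nu
       <= phiB [ffun w => t * mu w + (1 - t) * nu w])
  /\ (forall mu, is_dist mu -> phiB mu <= phiB unif1).

Definition is_coupling (rho : {ffun bool * bool -> R}) : Prop :=
  (forall w, 0 <= rho w) /\ \sum_(w : bool * bool) rho w = 1 /\
  (forall w, \sum_(w' : bool) rho (w, w') = 2%:R^-1) /\
  (forall w, \sum_(w' : bool) rho (w', w) = 2%:R^-1).

Definition Epsi2 (s t : Assign K) : R :=
  \sum_(psi : Fun K) P psi * ((psi s)%:R * (psi t)%:R).

Definition varphiM (rho : {ffun bool * bool -> R}) : R :=
  \sum_(s : Assign K) \sum_(t : Assign K)
     Epsi2 s t * \prod_(i : 'I_K) rho (s i, t i).

Definition unif2 : {ffun bool * bool -> R} := [ffun _ => 4%:R^-1].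

Definition MIN : Prop :=
  is_coupling unif2 /\
  (forall rho, is_coupling rho -> rho <> unif2 -> varphiM unif2 < varphiM rho).

End Conditions.

(* Factor graph of a CSP with n variables ('I_n) and m constraints ('I_m);
   constraint a acts on the K-tuple dv a of variables. *)
Section FactorGraph.
Variables (K n m : nat) (dv : 'I_m -> {ffun 'I_K -> 'I_n}).

Definition fg_adj : rel ('I_n + 'I_m) :=
  fun x y => match x, y with
             | inl v, inr a => v \in codom (dv a)
             | inr a, inl v => v \in codom (dv a)
             | _, _ => false
             end.

Definition fg_edges : {set 'I_n * 'I_m} :=
  [set e : 'I_n * 'I_m | e.1 \in codom (dv e.2)].

Definition unicyclic : Prop :=
  (forall x y : 'I_n + 'I_m, connect fg_adj x y) /\ #|fg_edges| = (n + m)%N.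
End FactorGraph.

Definition UNI (K : nat) (Psi : {set Fun K}) : Prop :=
  forall (n m : nat) (dv : 'I_m -> {ffun 'I_K -> 'I_n}) (ps : 'I_m -> Fun K),
    (forall a, ps a \in Psi) ->
    (forall a, injective (dv a)) ->
    unicyclic dv ->
    exists s : {ffun 'I_n -> bool},
      (0 < \prod_(a : 'I_m) nat_of_bool (ps a [ffun i => s (dv a i)]))%N.

(* Main.v *)
Require Import Defs.
From HB Require Import structures.
From mathcomp Require Import all_boot all_order all_algebra all_fingroup.
From mathcomp Require Import zify ring lra.
Set Implicit Arguments. Unset Strict Implicit. Unset Printing Implicit Defensive.
Import Order.TTheory GRing.Theory Num.Theory.
Local Open Scope ring_scope.

Lemma card_lt (n m : nat) : (m <= n)%N -> #|[pred i : 'I_n | (i < m)%N]| = m.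
Proof.
move=> le; rewrite -sum1_card big_mkcond /=.
rewrite -(big_mkord xpredT (fun i => if (i < m)%N then 1%N else 0%N)).
rewrite (@big_cat_nat _ _ _ m) /= ?leq0n //.
rewrite big_nat_cond (eq_bigr (fun _ => 1%N)); last by move=> i /andP[/andP[_ ->]].
rewrite -big_nat_cond sum_nat_const_nat subn0 muln1.
rewrite big_nat_cond big1 ?addn0 // => i /andP[/andP[h _] _]; by rewrite ltnNge h.
Qed.

Lemma card_ge (k : nat) : #|[pred i : 'I_(2 * k) | (k <= i)%N]| = k.
Proof.
have := cardC [pred i : 'I_(2 * k) | (i < k)%N].
rewrite card_lt ?leq_pmull // card_ord => h.
have -> : #|[pred i : 'I_(2 * k) | (k <= i)%N]| = #|[predC [pred i : 'I_(2 * k) | (i < k)%N]]|.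
  by apply: eq_card => i; rewrite !inE -leqNgt.
by rewrite addnC in h; apply/eqP; rewrite -(eqn_add2r (k)) h; apply/eqP; lia.
Qed.

Definition core (k : nat) (e : 'I_(2 * k) -> int) : bool :=
  let p := \prod_(i : 'I_(2 * k) | (i < k)%N) e i in
  let S := \sum_(i : 'I_(2 * k) | (k <= i)%N) e i in
  ((p == 1) && (S < 0)) || ((p == -1) && (0 < S)).

Definition pm1 (k : nat) (e : 'I_(2 * k) -> int) := forall i, (e i == 1) || (e i == -1).

Lemma prod_pm1 k (e : 'I_(2 * k) -> int) (P : pred 'I_(2 * k)) : pm1 e ->
  (\prod_(i | P i) e i == 1) || (\prod_(i | P i) e i == -1).
Proof.
move=> h; apply: (big_ind (fun x : int => (x == 1) || (x == -1))) => // .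
- by move=> x y /orP[] /eqP-> /orP[] /eqP->; rewrite ?mulr1 ?mulN1r ?opprK ?eqxx ?orbT.
Qed.

Lemma sum_pm1_neq0 k (e : 'I_(2 * k) -> int) : odd k -> pm1 e ->
  \sum_(i : 'I_(2 * k) | (k <= i)%N) e i != 0.
Proof.
move=> ok h.
have E : \sum_(i : 'I_(2 * k) | (k <= i)%N) e i =
  (k%:Z) - 2 * \sum_(i : 'I_(2 * k) | (k <= i)%N) ((e i == -1) : int).
  rewrite -[X in X%:Z - _](card_ge k) -sum1_card -natz natr_sum mulr_sumr -sumrB.
  apply: eq_bigr => i _; by case/orP: (h i) => /eqP->.
rewrite E; apply/eqP => E2.
have [m hm] : exists m, k = (2 * m + 1)%N.
  by exists k./2; rewrite -[k in LHS]odd_double_half ok -mul2n addnC.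
have N0 : 0 <= \sum_(i : 'I_(2 * k) | (k <= i)%N) ((e i == -1) : int).
  by apply: sumr_ge0 => i _; case: (e i == -1).
move: E2 N0; set N := \sum_(i : 'I_(2 * k) | (k <= i)%N) ((e i == -1) : int).
case: N => // n E2 _; lia.
Qed.

Lemma core_flip k (e e' : 'I_(2 * k) -> int) (i0 : 'I_(2 * k)) : odd k -> pm1 e ->
  (i0 < k)%N -> e' i0 = - e i0 -> (forall i, i != i0 -> e' i = e i) -> core e' = ~~ core e.
Proof.
move=> ok h lt0 e0 ei; rewrite /core.
have -> : \sum_(i : 'I_(2 * k) | (k <= i)%N) e' i = \sum_(i : 'I_(2 * k) | (k <= i)%N) e i.
  apply: eq_bigr => i hi; apply: ei; apply/eqP => E; move: hi; rewrite E leqNgt lt0 //.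
rewrite (bigD1 i0) //= [X in _ = ~~ ((X == _) && _ || (X == _) && _)](bigD1 i0) //= e0.
have -> : \prod_(i : 'I_(2 * k) | (i < k)%N && (i != i0)) e' i =
          \prod_(i : 'I_(2 * k) | (i < k)%N && (i != i0)) e i.
  by apply: eq_bigr => i /andP[_ /ei].
have := sum_pm1_neq0 ok h.
have := prod_pm1 (fun i : 'I_(2 * k) => (i < k)%N && (i != i0)) h.
case/orP: (h i0) => /eqP-> /orP[] /eqP->;
  set S := \sum_(i : 'I_(2 * k) | (k <= i)%N) e i => hS;
  rewrite /= ?mulr1 ?mulN1r ?opprK ?eqxx /=; 
  case: (ltrgtP S 0) hS => //= _ _; by [].
Qed.

Lemma core_neg k (e : 'I_(2 * k) -> int) : odd k -> core (fun i => - e i) = core e.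
Proof.
move=> ok; rewrite /core prodrN sumrN card_lt ?leq_pmull // -signr_odd ok expr1 mulN1r.
by rewrite oppr_lt0 oppr_gt0 !eqr_oppLR opprK orbC.
Qed.
Definition evec k (tau : Assign (2 * k)) (th : {perm 'I_(2 * k)}) (s : Assign (2 * k)) : 'I_(2 * k) -> int :=
  fun i => spin (s (th i)) * spin (tau i).

Lemma psi_core k (tau : Assign (2 * k)) (th : {perm 'I_(2 * k)}) (s : Assign (2 * k)) : psi_maj tau th s = core (@evec k tau th s).
Proof. by rewrite ffunE. Qed.

Lemma core_ext k (e e' : 'I_(2 * k) -> int) : (forall i, e i = e' i) -> core e = core e'.
Proof.
move=> h; rewrite /core.
have -> : \prod_(i : 'I_(2 * k) | (i < k)%N) e i = \prod_(i : 'I_(2 * k) | (i < k)%N) e' i.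
  by apply: eq_bigr.
have -> : \sum_(i : 'I_(2 * k) | (k <= i)%N) e i = \sum_(i : 'I_(2 * k) | (k <= i)%N) e' i.
  by apply: eq_bigr.
by [].
Qed.

Lemma spinN b : spin (~~ b) = - spin b. Proof. by case: b. Qed.

Lemma evec_pm1 k (tau : Assign (2 * k)) (th : {perm 'I_(2 * k)}) (s : Assign (2 * k)) : pm1 (@evec k tau th s).
Proof. by move=> i; rewrite /evec; case: (s (th i)); case: (tau i). Qed.

Definition flip K (j : 'I_K) (s : Assign K) : Assign K := [ffun x => if x == j then ~~ s x else s x].
Definition compl K (s : Assign K) : Assign K := [ffun x => ~~ s x].

Lemma flipK K j : involutive (@flip K j).
Proof. by move=> s; apply/ffunP => x; rewrite !ffunE; case: eqP => // _; rewrite negbK. Qed.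

Lemma complK K : involutive (@compl K).
Proof. by move=> s; apply/ffunP => x; rewrite !ffunE negbK. Qed.

Lemma psi_flip k (tau : Assign (2 * k)) (th : {perm 'I_(2 * k)}) (s : Assign (2 * k)) (i0 : 'I_(2 * k)) : odd k -> (i0 < k)%N ->
  psi_maj tau th (flip (th i0) s) = ~~ psi_maj tau th s.
Proof.
move=> ok lt; rewrite !psi_core; apply: (core_flip (i0 := i0)) => //; first exact: evec_pm1.
- by rewrite /evec ffunE eqxx spinN mulNr.
- move=> i ne; rewrite /evec ffunE; case: eqP => // /perm_inj E; by rewrite E eqxx in ne.
Qed.

Lemma psi_fliptau k (tau : Assign (2 * k)) (th : {perm 'I_(2 * k)}) (s : Assign (2 * k)) (i0 : 'I_(2 * k)) : odd k -> (i0 < k)%N ->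
  psi_maj (flip i0 tau) th s = ~~ psi_maj tau th s.
Proof.
move=> ok lt; rewrite !psi_core; apply: (core_flip (i0 := i0)) => //; first exact: evec_pm1.
- by rewrite /evec ffunE eqxx spinN mulrN.
- by move=> i ne; rewrite /evec ffunE (negbTE ne).
Qed.

Lemma psi_compl k (tau : Assign (2 * k)) (th : {perm 'I_(2 * k)}) (s : Assign (2 * k)) : odd k -> psi_maj tau th (compl s) = psi_maj tau th s.
Proof.
move=> ok; rewrite !psi_core -[RHS](core_neg _ ok); apply: core_ext => i.
by rewrite /evec ffunE spinN mulNr.
Qed.

Lemma half_sum (R : realFieldType) (T : finType) (Q : pred T) (f : T -> bool) (g : T -> T) :
  involutive g -> (forall x, Q (g x) = Q x) -> (forall x, f (g x) = ~~ f x) ->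
  2 * \sum_(x in Q) (f x)%:R = (#|Q|)%:R :> R.
Proof.
move=> hg hQ hf.
have E : \sum_(x in Q) (f x)%:R = \sum_(x in Q) (~~ f x)%:R :> R.
  rewrite (reindex_inj (inv_inj hg)) /=; apply: eq_big => x; first by rewrite -!topredE /= hQ.
  by rewrite hf.
rewrite mulr_natl mulr2n {2}E -big_split /= -sum1_card natr_sum.
by apply: eq_bigr => x _; case: (f x); rewrite /= ?addr0 ?add0r.
Qed.
Definition complF (T : finType) (f : {ffun T -> bool}) : {ffun T -> bool} := [ffun x => ~~ f x].

Lemma complFK (T : finType) : involutive (@complF T).
Proof. by move=> s; apply/ffunP => x; rewrite !ffunE negbK. Qed.

Lemma inPsi k (psi : Fun (2 * k)) :
  psi \in Psi_maj k -> exists tau th, psi = psi_maj tau th.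
Proof. by case/imset2P => tau th _ _ ->; exists tau, th. Qed.

Lemma psi_inPsi k tau th : psi_maj tau th \in Psi_maj k.
Proof. by apply: imset2_f. Qed.

Lemma Psi_complF k (psi : Fun (2 * k)) : odd k ->
  (complF psi \in Psi_maj k) = (psi \in Psi_maj k).
Proof.
move=> ok.
have kpos : (0 < k)%N by rewrite lt0n; apply/negP => /eqP k0; rewrite k0 in ok.
have k0 : (0 < 2 * k)%N by rewrite muln_gt0.
have k0' : (Ordinal k0 < k)%N by [].
suff H : forall psi : Fun (2 * k), psi \in Psi_maj k -> complF psi \in Psi_maj k.
  apply/idP/idP; last exact: H.
  by move/H; rewrite complFK.
move=> f /inPsi [tau [th ->]].
have -> : complF (psi_maj tau th) = psi_maj (flip (Ordinal k0) tau) th.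
  by apply/ffunP => s; rewrite [LHS]ffunE psi_fliptau.
exact: psi_inPsi.
Qed.

Lemma Psi_card_gt0 k : (0 < #|Psi_maj k|)%N.
Proof. apply/card_gt0P; exists (psi_maj [ffun => true] 1); exact: psi_inPsi. Qed.

Lemma Epsi_half (R : realFieldType) k (s : Assign (2 * k)) : odd k ->
  Epsi (@P_maj R k) s = 2^-1.
Proof.
move=> ok; rewrite /Epsi /P_maj.
rewrite (eq_bigr (fun psi => (#|Psi_maj k|%:R)^-1 * (if psi \in Psi_maj k then (psi s)%:R else 0))); last first.
  by move=> psi _; case: (psi \in Psi_maj k); rewrite ?mul0r ?mulr0.
rewrite -mulr_sumr -big_mkcond /=.
have := @half_sum R _ (fun x => x \in Psi_maj k) (fun psi : Fun (2 * k) => psi s) (@complF _) (@complFK _).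
move/(_ (fun x => Psi_complF x ok)) => /(_ (fun x => ffunE _ _)) H.
have c0 : (#|Psi_maj k|%:R : R) != 0 by rewrite pnatr_eq0 -lt0n Psi_card_gt0.
have two0 : (2 : R) != 0 by rewrite pnatr_eq0.
have HS : \sum_(i in Psi_maj k) (i s)%:R = (#|Psi_maj k|%:R : R) / 2.
  by rewrite -H mulrC mulKf.
by rewrite HS mulrA mulVf // mul1r.
Qed.
Lemma sum_prod_ffun (R : realFieldType) K (mu : bool -> R) :
  \sum_(t : Assign K) \prod_(i : 'I_K) mu (t i) = (\sum_b mu b) ^+ K.
Proof.
by rewrite -(bigA_distr_bigA (fun (i : 'I_K) b => mu b)) /= prodr_const card_ord.
Qed.

Lemma phiB_val (R : realFieldType) k (mu : {ffun bool -> R}) : odd k ->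
  phiB (@P_maj R k) mu = 2^-1 * (\sum_b mu b) ^+ (2 * k).
Proof.
move=> ok; rewrite /phiB (eq_bigr (fun t : Assign (2 * k) => 2^-1 * \prod_(i : 'I_(2 * k)) mu (t i))).
  by rewrite -mulr_sumr sum_prod_ffun.
by move=> t _; rewrite Epsi_half.
Qed.

Lemma BAL_maj (R : realFieldType) k : odd k -> BAL (@P_maj R k).
Proof.
move=> ok; split.
- move=> mu nu t [_ hm] [_ hn] _ _; rewrite !phiB_val // hm hn.
  have -> : \sum_b [ffun w => t * mu w + (1 - t) * nu w] b = 1.
    rewrite (eq_bigr (fun b => t * mu b + (1 - t) * nu b)); last by move=> b _; rewrite ffunE.
    by rewrite big_split /= -!mulr_sumr hm hn !mulr1 addrC subrK.
  by rewrite !expr1n !mulr1 -mulrDl addrC subrK mul1r.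
- move=> mu [_ hm]; rewrite !phiB_val // hm.
  have -> : \sum_b (unif1 R) b = 1.
    rewrite big_bool /= !ffunE.
    by field.
  exact: lexx.
Qed.

Lemma card_Assign K : #|{: Assign K}| = (2 ^ K)%N.
Proof. by rewrite card_ffun card_bool card_ord. Qed.

Lemma xi_val (R : realFieldType) k : odd k -> xi (@P_maj R k) = 2^-1.
Proof.
move=> ok; rewrite /xi (eq_bigr (fun _ => 2^-1)); last by move=> s _; rewrite Epsi_half.
rewrite sumr_const card_Assign -(mulr_natl (2^-1)) natrX.
have h2 : (2 : R) ^+ (2 * k) != 0 by rewrite expf_neq0 // pnatr_eq0.
by field.
Qed.
Lemma card_pred_sum (R : realFieldType) (T : finType) (Q : pred T) :
  (#|Q|%:R : R) = \sum_t (Q t)%:R.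
Proof. by rewrite -sumr_const big_mkcond /=; apply: eq_bigr => t _; rewrite unfold_in; case: (Q t). Qed.

Lemma count_half (R : realFieldType) K (i : 'I_K) (w : bool) :
  2 * (#|[pred t : Assign K | t i == w]|%:R : R) = (2 ^ K)%:R.
Proof.
rewrite -card_Assign.
have hf : forall t, (flip i t i == w) = ~~ (t i == w).
  by move=> t; rewrite ffunE eqxx; case: (t i); case: w.
have := @half_sum R (Assign K) predT (fun t => t i == w) (@flip K i) (@flipK K i) (fun _ => erefl) hf.
move=> <-; congr (_ * _); rewrite card_pred_sum; apply: eq_big => // t.
Qed.

Lemma sym1 (R : realFieldType) k (i : 'I_(2 * k)) (w : bool) (psi : Fun (2 * k)) :
  odd k -> (3 <= k)%N -> psi \in Psi_maj k ->
  \sum_(t : Assign (2 * k)) (t i == w)%:R * (psi t)%:R = 2%:R ^+ (2 * k).-1 * xi (@P_maj R k).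
Proof.
move=> ok k3 /inPsi [tau [th ->]].
have l0 : (0 < 2 * k)%N by lia.
have l1 : (1 < 2 * k)%N by lia.
pose j0 := Ordinal l0; pose j1 := Ordinal l1.
pose j := if th j0 == i then j1 else j0.
have hj : (j < k)%N by rewrite /j; case: (th j0 == i) => /=; lia.
have hne : th j != i.
  rewrite /j; case E: (th j0 == i); last by rewrite E.
  apply/eqP => E'; move/eqP: E; rewrite -E' => /perm_inj /(congr1 val) //.
have Qinv : forall t : Assign (2 * k), [pred t : Assign (2 * k) | t i == w] (flip (th j) t) = [pred t : Assign (2 * k) | t i == w] t.
  by move=> t /=; rewrite ffunE [i == _]eq_sym (negbTE hne).
have := @half_sum R _ _ (psi_maj tau th) _ (@flipK _ (th j)) Qinv (fun t => psi_flip tau th t ok hj).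
have -> : \sum_(t in [pred t : Assign (2 * k) | t i == w]) ((psi_maj tau th) t)%:R =
   \sum_(t : Assign (2 * k)) (t i == w)%:R * (psi_maj tau th t)%:R :> R.
  rewrite big_mkcond /=; apply: eq_bigr => t _; rewrite inE.
  by case: (t i == w); rewrite ?mul1r ?mul0r.
move=> H; have := count_half R i w; rewrite xi_val // natrX.
have e2 : (2 : R) ^+ (2 * k) = 2 * 2 ^+ (2 * k).-1 by rewrite -exprS prednK.
rewrite e2.
set L := \sum_(t : Assign (2 * k)) _.
set x := 2%:R ^+ (2 * k).-1.
set c := #|_|%:R in H *.
move=> H2; move: H; rewrite -/L => H; lra.
Qed.

Lemma permfun_psi k (th' : {perm 'I_(2 * k)}) (tau : Assign (2 * k)) (th : {perm 'I_(2 * k)}) :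
  permfun th' (psi_maj tau th) = psi_maj tau (th * th')%g.
Proof.
apply/ffunP => s; rewrite ffunE !psi_core; apply: core_ext => i.
by rewrite /evec ffunE permM.
Qed.

Lemma permfunK K (th : {perm 'I_K}) : cancel (permfun th) (permfun th^-1%g).
Proof.
move=> psi; apply/ffunP => s; rewrite !ffunE; congr (psi _).
by apply/ffunP => i; rewrite !ffunE permK.
Qed.

Lemma Psi_permfun k (th : {perm 'I_(2 * k)}) (psi : Fun (2 * k)) :
  (permfun th psi \in Psi_maj k) = (psi \in Psi_maj k).
Proof.
suff H : forall th (psi : Fun (2 * k)), psi \in Psi_maj k -> permfun th psi \in Psi_maj k.
  apply/idP/idP; last exact: H.
  by move/(H th^-1%g); rewrite permfunK.
by move=> th0 f /inPsi [tau [th1 ->]]; rewrite permfun_psi psi_inPsi.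
Qed.

Lemma SYM_maj (R : realFieldType) k : odd k -> (3 <= k)%N -> SYM (Psi_maj k) (@P_maj R k).
Proof.
move=> ok k3; split.
- by move=> i w psi; apply: sym1.
- by move=> th psi; rewrite /P_maj Psi_permfun.
Qed.
Section Fourier.
Variable (R : realFieldType) (K : nat).

Definition sp (b : bool) : R := if b then 1 else -1.
Definition chi (A s : Assign K) : R := \prod_(i : 'I_K) (if A i then sp (s i) else 1).
Definition cpow (c : R) (A : Assign K) : R := \prod_(i : 'I_K) (if A i then c else 1).
Definition hF (f : Assign K -> R) (A : Assign K) : R := \sum_(s : Assign K) f s * chi A s.

Lemma prod_expand (c : R) (s t : Assign K) :
  \prod_(i : 'I_K) (1 + c * sp (s i) * sp (t i)) = \sum_(A : Assign K) cpow c A * chi A s * chi A t.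
Proof.
rewrite (eq_bigr (fun i => \sum_(b : bool) (if b then c * sp (s i) * sp (t i) else 1))); last first.
  by move=> i _; rewrite big_bool /= addrC.
rewrite bigA_distr_bigA /=; apply: eq_bigr => A _.
rewrite /cpow /chi -!big_split /=; apply: eq_bigr => i _.
by case: (A i); rewrite ?mulr1.
Qed.

Lemma expand (f : Assign K -> R) (c : R) :
  \sum_(s : Assign K) \sum_(t : Assign K) f s * f t * \prod_(i : 'I_K) (1 + c * sp (s i) * sp (t i))
  = \sum_(A : Assign K) cpow c A * hF f A ^+ 2.
Proof.
under eq_bigr do under eq_bigr do rewrite prod_expand mulr_sumr.
under eq_bigr do rewrite exchange_big /=.
rewrite exchange_big /=; apply: eq_bigr => A _.
rewrite expr2 /hF mulr_suml mulr_sumr; apply: eq_bigr => s _.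
rewrite mulr_sumr mulr_sumr; apply: eq_bigr => t _.
ring.
Qed.


Lemma prod_one (s t : Assign K) :
  \prod_(i : 'I_K) (1 + 1 * sp (s i) * sp (t i)) = if s == t then 2 ^+ K else 0.
Proof.
case: eqP => [->|ne].
  rewrite (eq_bigr (fun _ => 2)); first by rewrite prodr_const card_ord.
  by move=> i _; rewrite /sp; case: (t i) => /=; ring.
have [i hi] : exists i, s i != t i.
  apply/existsP; rewrite -negb_forall; apply/negP => /forallP h; apply: ne.
  by apply/ffunP => i; exact/eqP.
rewrite (bigD1 i) //= [X in X * _](_ : _ = 0) ?mul0r //.
by move: hi; rewrite /sp; case: (s i); case: (t i); rewrite //= ?mul1r ?mulN1r ?opprK ?subrr.
Qed.

Lemma parseval (f : Assign K -> R) :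
  \sum_(A : Assign K) hF f A ^+ 2 = 2 ^+ K * \sum_(s : Assign K) f s ^+ 2.
Proof.
have -> : \sum_(A : Assign K) hF f A ^+ 2 = \sum_(A : Assign K) cpow 1 A * hF f A ^+ 2.
  by apply: eq_bigr => A _; rewrite /cpow big1 ?mul1r // => i _; case: (A i).
rewrite -expand mulr_sumr; apply: eq_bigr => s _.
under eq_bigr do rewrite prod_one.
rewrite (bigD1 s) //= eqxx big1 ?addr0; last first.
  by move=> t /negPf; rewrite eq_sym => ->; rewrite mulr0.
by rewrite expr2; ring.
Qed.

Lemma cpow_exp (c : R) (A : Assign K) : cpow c A = c ^+ #|[pred i | A i]|.
Proof. rewrite /cpow -big_mkcond /=; exact: prodr_const. Qed.

Lemma chi_compl (A s : Assign K) : chi A (compl s) = cpow (-1) A * chi A s.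
Proof.
rewrite /chi /cpow -big_split /=; apply: eq_bigr => i _; rewrite /compl ffunE.
case: (A i); first by rewrite /sp; case: (s i) => /=; ring.
by rewrite mulr1.
Qed.

Lemma hF_odd (f : Assign K -> R) (A : Assign K) :
  (forall s, f (compl s) = f s) -> odd #|[pred i | A i]| -> hF f A = 0.
Proof.
move=> hf oA.
have E : hF f A = - hF f A.
  rewrite {1}/hF (reindex_inj (inv_inj (@complK K))) /=.
  under eq_bigr do rewrite hf chi_compl cpow_exp -signr_odd oA expr1.
  by rewrite /hF -sumrN; apply: eq_bigr => s _; ring.
lra.
Qed.

End Fourier.

Definition fpsi (R : realFieldType) K (psi : Fun K) : Assign K -> R := fun s => (psi s)%:R.

Definition Gc (R : realFieldType) k (c : R) : R :=
  \sum_(psi in Psi_maj k) \sum_(A : Assign (2 * k)) cpow c A * hF (fpsi R psi) A ^+ 2.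

Lemma varphiM_repr (R : realFieldType) k (rho : {ffun bool * bool -> R}) (c : R) :
  (forall a b, rho (a, b) = 4^-1 * (1 + c * sp R a * sp R b)) ->
  varphiM (@P_maj R k) rho = (#|Psi_maj k|%:R)^-1 * (4^-1) ^+ (2 * k) * Gc k c.
Proof.
move=> hrho; rewrite /Gc.
transitivity (\sum_(s : Assign (2 * k)) \sum_(t : Assign (2 * k)) \sum_(psi : Fun (2 * k))
   (if psi \in Psi_maj k then (#|Psi_maj k|%:R)^-1 * (4^-1) ^+ (2 * k) *
       (fpsi R psi s * fpsi R psi t * \prod_(i : 'I_(2 * k)) (1 + c * sp R (s i) * sp R (t i))) else 0)).
  rewrite /varphiM /Epsi2; apply: eq_bigr => s _; apply: eq_bigr => t _; rewrite mulr_suml.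
  apply: eq_bigr => psi _.
  have -> : \prod_(i : 'I_(2 * k)) rho (s i, t i) =
     (4^-1) ^+ (2 * k) * \prod_(i : 'I_(2 * k)) (1 + c * sp R (s i) * sp R (t i)).
    by rewrite (eq_bigr _ (fun i _ => hrho (s i) (t i))) big_split /= prodr_const card_ord.
  by rewrite /P_maj /fpsi; case: (psi \in Psi_maj k); rewrite ?mul0r //; ring.
rewrite mulr_sumr [RHS]big_mkcond /=.
transitivity (\sum_(psi : Fun (2 * k)) \sum_(s : Assign (2 * k)) \sum_(t : Assign (2 * k))
   (if psi \in Psi_maj k then (#|Psi_maj k|%:R)^-1 * (4^-1) ^+ (2 * k) *
       (fpsi R psi s * fpsi R psi t * \prod_(i : 'I_(2 * k)) (1 + c * sp R (s i) * sp R (t i))) else 0)).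
  rewrite [RHS]exchange_big; apply: eq_bigr => s _; by rewrite [RHS]exchange_big.
apply: eq_bigr => psi _; case: (psi \in Psi_maj k).
  by rewrite -expand mulr_sumr; apply: eq_bigr => s _; rewrite mulr_sumr.
by rewrite big1 // => s _; rewrite big1.
Qed.

Lemma nA0 K (A : Assign K) : #|[pred i | A i]| = 0%N -> A = [ffun => false].
Proof.
move/card0_eq => h; apply/ffunP => i; rewrite ffunE.
by have := h i; rewrite !inE => ->.
Qed.

Lemma psi_strict (R : realFieldType) k (psi : Fun (2 * k)) (c : R) :
  odd k -> psi \in Psi_maj k -> c != 0 ->
  \sum_(A : Assign (2 * k)) cpow 0 A * hF (fpsi R psi) A ^+ 2 <
  \sum_(A : Assign (2 * k)) cpow c A * hF (fpsi R psi) A ^+ 2.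
Proof.
move=> ok hpsi c0.
have kpos : (0 < k)%N by rewrite lt0n; apply/negP => /eqP k0; rewrite k0 in ok.
have l0 : (0 < 2 * k)%N by rewrite muln_gt0.
set f := fpsi R psi.
set e0 : Assign (2 * k) := [ffun => false].
have chi0 : forall s, chi R e0 s = 1 by move=> s; rewrite /chi big1 // => i _; rewrite ffunE.
have cp0 : forall c' : R, cpow c' e0 = 1 by move=> c'; rewrite /cpow big1 // => i _; rewrite ffunE.
set H0 := hF f e0.
have H0E : H0 = \sum_s f s by rewrite /H0 /hF; apply: eq_bigr => s _; rewrite chi0 mulr1.
have hsum : 2 * H0 = 2 ^+ (2 * k).
  case/inPsi: hpsi => tau [th epsi].
  have hf : forall s, psi (flip (th (Ordinal l0)) s) = ~~ psi s by move=> s; rewrite epsi psi_flip.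
  have := @half_sum R (Assign (2 * k)) predT (fun s => psi s) (@flip _ (th (Ordinal l0)))
     (@flipK _ _) (fun _ => erefl) hf.
  rewrite H0E /f /fpsi card_Assign natrX => <-; congr (_ * _).
have sq : forall s, f s ^+ 2 = f s by move=> s; rewrite /f /fpsi; case: (psi s); rewrite ?expr1n ?expr0n.
have pars : \sum_A hF f A ^+ 2 = 2 * H0 ^+ 2.
  rewrite parseval (eq_bigr _ (fun s _ => sq s)) -H0E -hsum; ring.
have finv : forall s, f (compl s) = f s.
  by move=> s; rewrite /f /fpsi; case/inPsi: hpsi => tau [th ->]; rewrite psi_compl.
have rhs0 : \sum_(A : Assign (2 * k)) cpow 0 A * hF f A ^+ 2 = H0 ^+ 2.
  rewrite (bigD1 e0) //= cp0 mul1r big1 ?addr0 // => A hA; rewrite cpow_exp.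
  case n : #|_| => [|m]; first by rewrite (nA0 n) eqxx in hA.
  by rewrite expr0n /= mul0r.
rewrite rhs0 (bigD1 e0) //= cp0 mul1r -/H0.
have nonneg : forall A, 0 <= cpow c A * hF f A ^+ 2.
  move=> A; rewrite cpow_exp; case: (boolP (odd #|[pred i | A i]|)) => o.
    by rewrite hF_odd // expr0n mulr0.
  by apply: mulr_ge0; [exact: exprn_even_ge0 | exact: sqr_ge0].
have sum_pos : \sum_(A | A != e0) hF f A ^+ 2 = H0 ^+ 2.
  by move: pars; rewrite (bigD1 e0) //= -/H0 => pars; lra.
have H0pos : 0 < H0.
  have : (0 : R) < 2 ^+ (2 * k) by rewrite exprn_gt0.
  by rewrite -hsum; lra.
have [A0 /andP[hA0 tA0]] : exists A0, (A0 != e0) && (0 < hF f A0 ^+ 2).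
  apply: psumr_neq0P; first by move=> A _; exact: sqr_ge0.
  by rewrite sum_pos; apply/eqP; rewrite expf_neq0 // gt_eqF.
have hne : hF f A0 != 0 by apply/eqP => h0; rewrite h0 expr0n /= ltxx in tA0.
have ev : ~~ odd #|[pred i | A0 i]|.
  by apply/negP => o; rewrite hF_odd // eqxx in hne.
have tpos : 0 < cpow c A0 * hF f A0 ^+ 2.
  by rewrite mulr_gt0 // cpow_exp exprn_even_gt0 // c0 orbT.
rewrite (bigD1 A0) //=.
have rest : 0 <= \sum_(A | (A != e0) && (A != A0)) cpow c A * hF f A ^+ 2.
  by apply: sumr_ge0 => A _; exact: nonneg.
lra.
Qed.

Lemma coupling_repr (R : realFieldType) (rho : {ffun bool * bool -> R}) :
  is_coupling rho -> forall a b,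
  rho (a, b) = 4^-1 * (1 + (4 * rho (true, true) - 1) * sp R a * sp R b).
Proof.
move=> [_ [_ [h3 h4]]].
have a1 := h3 true; have a2 := h3 false; have a3 := h4 true; have a4 := h4 false.
rewrite !big_bool /= in a1 a2 a3 a4.
by case; case; rewrite /sp; lra.
Qed.

Lemma unif2_coupling (R : realFieldType) : is_coupling (unif2 R).
Proof.
split; first by move=> w; rewrite ffunE invr_ge0 ler0n.
split.
  rewrite (eq_bigr (fun _ => 4^-1)); last by move=> w _; rewrite ffunE.
  by rewrite sumr_const card_prod card_bool -(mulr_natr (4^-1 : R)) mulVf // pnatr_eq0.
split => w; rewrite (eq_bigr (fun _ => 4^-1)) ?sumr_const ?card_bool; try by move=> i _; rewrite ffunE.
  by rewrite -(mulr_natr (4^-1 : R)); field.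
by rewrite -(mulr_natr (4^-1 : R)); field.
Qed.

Lemma MIN_maj (R : realFieldType) k : odd k -> MIN (@P_maj R k).
Proof.
move=> ok; split; first exact: unif2_coupling.
move=> rho hc hne.
set c := 4 * rho (true, true) - 1.
have hr := coupling_repr hc.
have hu : forall a b, (unif2 R) (a, b) = 4^-1 * (1 + 0 * sp R a * sp R b).
  by move=> a b; rewrite ffunE !mul0r addr0 mulr1.
have c0 : c != 0.
  apply/eqP => c0; apply: hne; apply/ffunP => [[a b]].
  by rewrite hr -/c c0 -hu.
rewrite (@varphiM_repr R k _ _ hu) (@varphiM_repr R k _ _ hr) -/c.
have Cpos : 0 < (#|Psi_maj k|%:R : R)^-1 * (4^-1) ^+ (2 * k).
  rewrite mulr_gt0 // ?invr_gt0 ?ltr0n ?Psi_card_gt0 // exprn_gt0 // invr_gt0 ltr0n //.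
rewrite ltr_pM2l //.
apply: ltr_sum.
  by apply/hasP; exists (psi_maj [ffun => true] 1); [rewrite mem_index_enum | exact: psi_inPsi].
by move=> psi hpsi; apply: psi_strict.
Qed.

Section Layers.
Variables (X : finType) (adj : rel X) (H : {set X}).

Fixpoint Lay (j : nat) : {set X} :=
  if j is j'.+1 then Lay j' :|: [set x | [exists y in Lay j', adj x y]] else H.

Lemma Lay_path x p : last x p \in H -> path adj x p -> x \in Lay (size p).
Proof.
elim: p x => [|y p IH] x /=; first by move=> h _.
move=> hl /andP[hxy hp]; rewrite inE; apply/orP; right.
by rewrite inE; apply/existsP; exists y; rewrite IH.
Qed.

Hypothesis conn : forall x, exists2 y, y \in H & connect adj x y.

Lemma inLay x : exists j, x \in Lay j.
Proof.
have [y yH /connectP [p hp ey]] := conn x.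
by exists (size p); apply: Lay_path => //; rewrite -ey.
Qed.

Definition dist x := ex_minn (inLay x).

Lemma dist_in x : x \in Lay (dist x).
Proof. by rewrite /dist; case: ex_minnP. Qed.

Lemma dist_min x j : x \in Lay j -> (dist x <= j)%N.
Proof. by rewrite /dist; case: ex_minnP => d _ hm /hm. Qed.

Lemma dist_step x : x \notin H -> exists y, adj x y && (dist y < dist x)%N.
Proof.
move=> xH; have := dist_in x; case E : (dist x) => [|d] /=.
  by move=> h; rewrite h in xH.
rewrite inE => /orP[h|].
  by have := dist_min h; rewrite E ltnn.
rewrite inE => /existsP [y /andP [yL hxy]]; exists y; rewrite hxy /=.
by rewrite ltnS dist_min.
Qed.

Definition gnext x := if [pick y | adj x y && (dist y < dist x)%N] is Some y then y else x.

Lemma gnextP x : x \notin H -> adj x (gnext x) && (dist (gnext x) < dist x)%N.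
Proof.
move=> xH; rewrite /gnext; case: pickP => // none.
by have [y] := dist_step xH; rewrite none.
Qed.

Lemma layer_inj (Y : finType) (ed : X -> X -> Y) :
  (forall x1 y1 x2 y2, adj x1 y1 -> adj x2 y2 -> ed x1 y1 = ed x2 y2 ->
      x1 = x2 \/ (x1 = y2 /\ y1 = x2)) ->
  {in ~: H &, injective (fun x => ed x (gnext x))}.
Proof.
move=> hed x1 x2; rewrite !inE => h1 h2 E.
have /andP [a1 d1] := gnextP h1; have /andP [a2 d2] := gnextP h2.
case: (hed _ _ _ _ a1 a2 E) => // [[e1 e2]].
move: d1 d2; rewrite e2 -e1; lia.
Qed.

End Layers.

Lemma sum_mem (T : finType) (A : {pred T}) : (\sum_(x : T) (x \in A) = #|A|)%N.
Proof. by rewrite -sum1_card [RHS]big_mkcond; apply: eq_bigr => x _; case: (x \in A). Qed.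

Section Graph.
Variables (K n m : nat) (dv : 'I_m -> {ffun 'I_K -> 'I_n}).
Hypothesis dinj : forall a, injective (dv a).
Hypothesis uni : unicyclic dv.

Definition VB (B : {set 'I_m}) : {set 'I_n} := [set v | [exists a in B, v \in codom (dv a)]].
Definition Hs (B : {set 'I_m}) : {set 'I_n + 'I_m} := (inl @: VB B) :|: (inr @: B).
Definition ed (x y : 'I_n + 'I_m) : option ('I_n * 'I_m) :=
  match x, y with
  | inl v, inr a => Some (v, a)
  | inr a, inl v => Some (v, a)
  | _, _ => None
  end.
Definition EB (B : {set 'I_m}) : {set 'I_n * 'I_m} :=
  [set e : 'I_n * 'I_m | (e.1 \in codom (dv e.2)) && (e.2 \in B)].

Lemma in_Hs_l B v : (inl v \in Hs B) = (v \in VB B).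
Proof.
rewrite /Hs inE; apply/orP/idP => [[/imsetP [v' hv [->]] // | /imsetP [a _ //]] | hv].
by left; apply: imset_f.
Qed.

Lemma in_Hs_r B a : (inr a \in Hs B) = (a \in B).
Proof.
rewrite /Hs inE; apply/orP/idP => [[/imsetP [v _ //] | /imsetP [a' ha [->]] //] | ha].
by right; apply: imset_f.
Qed.

Lemma card_Hs B : #|Hs B| = (#|VB B| + #|B|)%N.
Proof.
rewrite /Hs cardsU !card_imset; try by move=> ? ? [].
suff -> : inl @: VB B :&: inr @: B = set0 by rewrite cards0 subn0.
apply/setP => x; rewrite !inE; apply/negP => /andP [/imsetP [v _ ->] /imsetP [a _ //]].
Qed.


Lemma card_EB B : #|EB B| = (#|B| * K)%N.
Proof.
rewrite -sum_mem (eq_bigr (fun e => nat_of_bool ((e.1 \in codom (dv e.2)) && (e.2 \in B)))); last first.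
  by move=> e _; rewrite inE.
rewrite -(pair_bigA _ (fun v a => nat_of_bool ((v \in codom (dv a)) && (a \in B)))) /= exchange_big /=.
rewrite -sum_mem big_distrl /=; apply: eq_bigr => a _.
case: (a \in B); last by rewrite big1 // => v _; rewrite andbF.
by rewrite mul1n (eq_bigr (fun v => nat_of_bool (v \in codom (dv a)))) ?sum_mem ?card_codom ?card_ord // => v _; rewrite andbT.
Qed.

Lemma graph_ineq B : B != set0 -> (#|B| * K <= #|VB B| + #|B|)%N.
Proof.
case/set0Pn => a0 ha0.
have conn : forall x, exists2 y, y \in Hs B & connect (fg_adj dv) x y.
  by move=> x; exists (inr a0); [rewrite in_Hs_r | exact: uni.1].
have hed : forall x1 y1 x2 y2, fg_adj dv x1 y1 -> fg_adj dv x2 y2 -> ed x1 y1 = ed x2 y2 ->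
      x1 = x2 \/ (x1 = y2 /\ y1 = x2).
  by case=> ? [] ? [] ? [] ? //= _ _ [-> ->]; auto.
have inj := @layer_inj _ (fg_adj dv) (Hs B) conn _ ed hed.
set gx := fun x => ed x (gnext conn x) in inj.
have c1 : #|gx @: ~: Hs B| = #|~: Hs B| by apply: card_in_imset.
have sub : (gx @: ~: Hs B) \subset (Some @: (fg_edges dv :\: EB B)).
  apply/subsetP => z /imsetP [x hx ->]; rewrite inE in hx.
  have /andP [hadj _] := gnextP conn hx.
  rewrite /gx; move: hadj hx; case: x => [v|a]; case: (gnext conn _) => [v'|a'] //= hadj hx;
    apply: imset_f; rewrite !inE /= hadj /= ?andbT.
  - apply/negP => ha'; move: hx; rewrite in_Hs_l inE; apply/negP; rewrite negbK.
    by apply/existsP; exists a'; rewrite ha'.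
  - by rewrite in_Hs_r in hx.
have c2 : #|Some @: (fg_edges dv :\: EB B)| = #|fg_edges dv :\: EB B| by apply: card_imset => ? ? [].
have sEB : EB B \subset fg_edges dv by apply/subsetP => e; rewrite !inE => /andP[].
have c3 : #|fg_edges dv :\: EB B| = (#|fg_edges dv| - #|EB B|)%N.
  by rewrite cardsD (setIidPr sEB).
have c4 := subset_leq_card sEB.
have c5 : (#|Hs B| + #|~: Hs B| = n + m)%N by rewrite cardsC card_sum !card_ord.
have c6 := subset_leq_card sub.
rewrite card_Hs in c5; rewrite card_EB in c3 c4; rewrite uni.2 in c3 c4; rewrite c1 c2 c3 in c6.
lia.
Qed.
End Graph.

Section Uni.
Variables (k n m : nat) (dv : 'I_m -> {ffun 'I_(2 * k) -> 'I_n}) (ps : 'I_m -> Fun (2 * k)).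
Variables (tau : 'I_m -> Assign (2 * k)) (th : 'I_m -> {perm 'I_(2 * k)}).
Hypothesis ok : odd k.
Hypothesis k3 : (3 <= k)%N.
Hypothesis dinj : forall a, injective (dv a).
Hypothesis uni : unicyclic dv.
Hypothesis hpsd : forall a, ps a = psi_maj (tau a) (th a).

Definition MV (b : 'I_m) : {set 'I_n} := [set dv b (th b i) | i in [pred i : 'I_(2 * k) | (k <= i)%N]].

Lemma card_MV b : #|MV b| = k.
Proof.
rewrite /MV card_imset ?card_ge //.
by move=> i j /dinj /perm_inj.
Qed.

Lemma card_CS b : #|[set v in codom (dv b)]| = (2 * k)%N.
Proof. by rewrite cardsE card_codom ?card_ord. Qed.

Lemma dcount (B : {set 'I_m}) (S : 'I_m -> {set 'I_n}) :
  (\sum_(v : 'I_n) \sum_(b in B) (v \in S b) = \sum_(b in B) #|S b|)%N.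
Proof. by rewrite exchange_big /=; apply: eq_bigr => b _; rewrite sum_mem. Qed.

Lemma private_var (B : {set 'I_m}) : B != set0 ->
  exists2 a, a \in B & exists2 i : 'I_(2 * k), (i < k)%N &
    forall b, b \in B -> b != a -> dv a (th a i) \notin codom (dv b).
Proof.
move=> B0.
case: (boolP [exists a in B, [exists i : 'I_(2 * k), (i < k)%N &&
          [forall b in B, (b != a) ==> (dv a (th a i) \notin codom (dv b))]]]).
  case/existsP => a /andP [ha /existsP [i /andP [hi /forallP hb]]].
  exists a => //; exists i => // b hbB hba.
  by have := hb b; rewrite hbB hba.
move=> nf.
have shared : forall a (i : 'I_(2 * k)), a \in B -> (i < k)%N ->
    exists2 b, b \in B & (b != a) && (dv a (th a i) \in codom (dv b)).
  move=> a i ha hi.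
  case: (boolP [exists b in B, (b != a) && (dv a (th a i) \in codom (dv b))]).
    by case/exists_inP => b hb hb2; exists b.
  move=> hn; move/negP: nf; case.
  apply/existsP; exists a; rewrite ha /=; apply/existsP; exists i; rewrite hi /=.
  apply/forallP => b; apply/implyP => hb; apply/implyP => hba; apply/negP => hin.
  by move/negP: hn; apply; apply/exists_inP; exists b => //; rewrite hba.
pose deg v := (\sum_(b in B) (v \in [set v in codom (dv b)]))%N.
pose mj v := (\sum_(b in B) (v \in MV b))%N.
have deg1 : forall v a, a \in B -> v \in codom (dv a) -> (1 <= deg v)%N.
  by move=> v a ha hv; rewrite /deg (bigD1 a) //= inE hv.
have two : forall v, v \in VB dv B -> (2 <= deg v + mj v)%N.
  move=> v; rewrite inE => /exists_inP [a ha hv].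
  have := hv; case/codomP => j ej.
  pose i := ((th a)^-1 j)%g.
  have ji : j = th a i by rewrite /i permKV.
  case: (ltnP i k) => hik.
    have [b hb /andP [hba hbv]] := shared a i ha hik.
    rewrite -ji -ej in hbv.
    have : (2 <= deg v)%N.
      rewrite /deg (bigD1 a) //= inE hv (bigD1 b) /=; last by rewrite hb hba.
      by rewrite inE hbv.
    lia.
  have hm : v \in MV a by rewrite ej ji; apply: imset_f.
  have : (1 <= mj v)%N by rewrite /mj (bigD1 a) //= hm.
  have := deg1 v a ha hv; lia.
have sdeg : (\sum_v deg v = #|B| * (2 * k))%N.
  rewrite /deg dcount (eq_bigr (fun _ => 2 * k)%N) ?sum_nat_const //.
  by move=> b _; rewrite card_CS.
have smj : (\sum_v mj v = #|B| * k)%N.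
  rewrite /mj dcount (eq_bigr (fun _ => k)%N) ?sum_nat_const //.
  by move=> b _; rewrite card_MV.
have hV : (2 * #|VB dv B| <= #|B| * (2 * k) + #|B| * k)%N.
  rewrite -sdeg -smj -big_split /=.
  apply: (@leq_trans (\sum_(v in VB dv B) (deg v + mj v))).
    rewrite -sum1_card big_distrr /=; apply: leq_sum => v hv; rewrite muln1; exact: two.
  by rewrite [X in (_ <= X)%N](bigID (fun v => v \in VB dv B)) /= leq_addr.
have hg := graph_ineq dinj uni B0.
have bpos : (0 < #|B|)%N by rewrite card_gt0.
nia.
Qed.

Lemma sat_all (B : {set 'I_m}) :
  exists s : {ffun 'I_n -> bool}, forall a, a \in B -> ps a [ffun i => s (dv a i)].
Proof.
elim: {B}_.+1 {-2}B (ltnSn #|B|) => // N IH B hB.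
case: (eqVneq B set0) => [->|B0].
  by exists [ffun => false] => a; rewrite inE.
have [a ha [i hi hpriv]] := private_var B0.
have [s' hs'] : exists s' : {ffun 'I_n -> bool},
    forall b, b \in B :\ a -> ps b [ffun j => s' (dv b j)].
  by apply: IH; rewrite (cardsD1 a B) ha in hB; lia.
set v := dv a (th a i).
exists (if ps a [ffun j => s' (dv a j)] then s' else flip v s') => b hb.
case: (eqVneq b a) => [->|hba].
  case E : (ps a [ffun j => s' (dv a j)]) => //.
  have -> : [ffun j => flip v s' (dv a j)] = flip (th a i) [ffun j => s' (dv a j)].
    by apply/ffunP => j; rewrite !ffunE (inj_eq (@dinj a)).
  by rewrite hpsd psi_flip // -hpsd E.
have hb' : b \in B :\ a by rewrite !inE hba.
case: ifP => _; first exact: hs'.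
have -> : [ffun j => flip v s' (dv b j)] = [ffun j => s' (dv b j)].
  apply/ffunP => j; rewrite !ffunE.
  have : dv b j != v by apply/eqP => e; move: (hpriv b hb hba); rewrite -/v -e codom_f.
  by move/negbTE ->.
exact: hs'.
Qed.
End Uni.

Lemma UNI_maj k : odd k -> (3 <= k)%N -> UNI (Psi_maj k).
Proof.
move=> ok k3 n m dv ps hps dinj uni.
have [f hf] : exists f : 'I_m -> Assign (2 * k) * {perm 'I_(2 * k)},
    forall a, ps a = psi_maj (f a).1 (f a).2.
  apply: (@fin_all_exists _ (fun _ => (Assign (2 * k) * {perm 'I_(2 * k)})%type) (fun a p => ps a = psi_maj p.1 p.2)) => a.
  by have [tau [th e]] := inPsi (hps a); exists (tau, th).
have [s hs] := @sat_all k n m dv ps (fun a => (f a).1) (fun a => (f a).2) ok k3 dinj uni hf setT.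
by exists s; apply: prodn_gt0 => a; rewrite hs ?inE.
Qed.

Theorem mainTheorem16 (R : realFieldType) (k : nat) :
  odd k -> (3 <= k)%N ->
  SYM (Psi_maj k) (@P_maj R k) /\ BAL (@P_maj R k) /\ MIN (@P_maj R k)
  /\ UNI (Psi_maj k).
Proof.
move=> ok k3; split; first exact: SYM_maj.
split; first exact: BAL_maj.
split; first exact: MIN_maj.
exact: UNI_maj.
Qed.
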